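(* Let $n\ge 4$, $N=\{1,\dots,n\}$, fix distinct $i_1,i_2\in N$ and let $\hat N^c=N\setminus\{i_1,i_2\}$. Then the inequality $$x_{i_2i_1}+\sum_{j\in\hat N^c}\left(x_{i_1j}+x_{ji_2}\right)-x_{i_1i_2}-\sum_{j,j'\in\hat N^c:\,j\ne j'} x_{jj'}\le 2-\frac{(n-4)(n-5)}{2}$$ is a valid inequality for the weak order polytope $P^n_{WO}$, i.e. it holds for every point $x\in P^n_{WO}$.
   Context: Let $N=\{1,\dots,n\}$ and $A_N=\{(i,j): i,j\in N, i\ne j\}$. A weak order on $N$ is a binary relation $W\subseteq N\times N$ that is reflexive, transitive and total; $(i,j)\in W$ is read ''$i$ is preferred over or tied with $j$''. The characteristic vector of $W$ is $x^W\in\{0,1\}^{A_N}$ with $x^W_{(i,j)}=1$ if $(i,j)\in W$ and $0$ otherwise. The weak order polytope $P^n_{WO}$ is the convex hull of the characteristic vectors of all weak orders on $N$; its points are vectors $x\in\mathbb{R}^{A_N}$ and $x_{ij}$ denotes the coordinate $x_{(i,j)}$. *)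

(* Defs.v *)
From HB Require Import structures.
From mathcomp Require Import all_boot all_order all_algebra.
Set Implicit Arguments. Unset Strict Implicit. Unset Printing Implicit Defensive.
Import Order.TTheory GRing.Theory Num.Theory.
Local Open Scope ring_scope.

(* N = {1,..,n} is represented by 'I_n.  A binary relation on N is a
   boolean function on pairs. *)
Definition relN (n : nat) := {ffun 'I_n * 'I_n -> bool}.

Definition weak_order (n : nat) (W : relN n) : bool :=
  [&& [forall i, W (i, i)],
      [forall i, forall j, forall k, W (i, j) ==> W (j, k) ==> W (i, k)]
    & [forall i, forall j, W (i, j) || W (j, i)]].

(* Characteristic vector of W, coordinate (i,j) (only used for i <> j). *)
Definition char_vec (R : pzSemiRingType) (n : nat) (W : relN n) (i j : 'I_n) : R :=
  (W (i, j))%:R.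

(* A point x of R^{A_N} is given by its coordinates x i j for i <> j
   (diagonal values of the function are irrelevant).  x lies in the weak
   order polytope iff it is a convex combination of the characteristic
   vectors of the (finitely many) weak orders on N. *)
Definition in_PWO (R : realFieldType) (n : nat) (x : 'I_n -> 'I_n -> R) : Prop :=
  exists lam : relN n -> R,
    (forall W, weak_order W -> 0 <= lam W) /\
    \sum_(W | weak_order W) lam W = 1 /\
    (forall i j : 'I_n, i != j ->
       x i j = \sum_(W | weak_order W) lam W * char_vec R W i j).

(* Main.v *)
Require Import Defs.
From HB Require Import structures.
From mathcomp Require Import all_boot all_order all_algebra.
From mathcomp Require Import lra zify.
Import Order.TTheory GRing.Theory Num.Theory.
Local Open Scope ring_scope.
Lemma card2 (n : nat) (i1 i2 : 'I_n) : i1 != i2 ->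
  #|[pred j : 'I_n | (j != i1) && (j != i2)]| = (n - 2)%N.
Proof.
move=> h.
have := cardD1 i1 [pred j : 'I_n | true]. rewrite card_ord inE /=.
rewrite (cardD1 i2) !inE eq_sym h /=.
have -> : #|[predD1 [predD1 [pred _ | true] & i1] & i2]| = #|[pred j : 'I_n | (j != i1) && (j != i2)]|.
  apply: eq_card => j; rewrite !inE; by case: (j == i1); case: (j == i2).
lia.
Qed.
Lemma card3 (n : nat) (i1 i2 j : 'I_n) : i1 != i2 -> j != i1 -> j != i2 ->
  #|[pred j' : 'I_n | [&& j' != i1, j' != i2 & j' != j]]| = (n - 3)%N.
Proof.
move=> h h1 h2.
have := cardD1 i1 [pred j : 'I_n | true]. rewrite card_ord inE /=.
rewrite (cardD1 i2) !inE eq_sym h /=.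
rewrite (cardD1 j) !inE h1 h2 /=.
have -> : #|[predD1 [predD1 [predD1 [pred _ | true] & i1] & i2] & j]| = #|[pred j' : 'I_n | [&& j' != i1, j' != i2 & j' != j]]|.
  apply: eq_card => k; rewrite !inE; by case: (k == i1); case: (k == i2); case: (k==j).
lia.
Qed.
Lemma sumc (R : realFieldType) (T : finType) (P : pred T) (c : R) :
  \sum_(j | P j) c = c *+ #|[pred j | P j]|.
Proof. by rewrite sumr_const. Qed.

Section PW.
Variables (R : realFieldType) (n : nat) (i1 i2 : 'I_n) (w : 'I_n -> 'I_n -> bool).
Hypothesis wtr : forall i j k, w i j -> w j k -> w i k.
Hypothesis wtot : forall i j, w i j || w j i.
Hypothesis n4 : (4 <= n)%N.
Hypothesis hi : i1 != i2.
Let b (i j : 'I_n) : R := (w i j)%:R.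

Let M := fun j : 'I_n => (j != i1) && (j != i2).

Lemma Dswap : \sum_(j : 'I_n | (j != i1) && (j != i2))
      \sum_(j' : 'I_n | [&& j' != i1, j' != i2 & j' != j]) b j j' =
  \sum_(j : 'I_n | (j != i1) && (j != i2))
      \sum_(j' : 'I_n | [&& j' != i1, j' != i2 & j' != j]) b j' j.
Proof.
rewrite (exchange_big_dep (fun j => (j != i1) && (j != i2))) /=; last first.
  by move=> i j _ /and3P[-> -> _].
apply: eq_bigr => j /andP[h1 h2]; apply: eq_bigl => k.
by rewrite h1 h2 (eq_sym j) /= -andbA.
Qed.

Lemma Qsum : \sum_(j : 'I_n | (j != i1) && (j != i2))
      \sum_(j' : 'I_n | [&& j' != i1, j' != i2 & j' != j]) (1 : R) =
   ((n - 2) * (n - 3))%:R.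
Proof.
rewrite (eq_bigr (fun _ => ((n - 3)%:R : R))); last first.
  move=> j /andP[h1 h2]; by rewrite sumc card3.
by rewrite sumc card2 // natrM mulrC mulr_natr.
Qed.

Lemma Dlow : ((n - 2) * (n - 3))%:R <= 2 * \sum_(j : 'I_n | (j != i1) && (j != i2))
      \sum_(j' : 'I_n | [&& j' != i1, j' != i2 & j' != j]) b j j'.
Proof.
rewrite -[2]/(1+1) mulrDl mul1r {2}Dswap -big_split /= -Qsum.
apply: ler_sum => j _; rewrite -big_split /=; apply: ler_sum => k _.
rewrite /b; case/orP: (wtot j k) => ->; case: (w _ _) => /=; lra.
Qed.

Let S := \sum_(j : 'I_n | (j != i1) && (j != i2)) (b i1 j + b j i2).
Let D := \sum_(j : 'I_n | (j != i1) && (j != i2))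
      \sum_(j' : 'I_n | [&& j' != i1, j' != i2 & j' != j]) b j j'.

Lemma bnd (c : R) : (forall j, j != i1 -> j != i2 -> b i1 j + b j i2 <= c) ->
  S <= c * (n - 2)%:R.
Proof.
move=> h; apply: (@le_trans _ _ (\sum_(j : 'I_n | (j != i1) && (j != i2)) c)).
  by apply: ler_sum => j /andP[h1 h2]; apply: h.
by rewrite sumc card2 // mulr_natr.
Qed.

Lemma key : (b i2 i1 - b i1 i2 + S <= 2 * (n - 2)%:R - 1) \/
            (b i2 i1 - b i1 i2 + S <= 2 * (n - 2)%:R /\ D = ((n - 2) * (n - 3))%:R).
Proof.
have m2 : (2 <= (n - 2)%:R :> R) by rewrite ler_nat; lia.
have S2 : S <= 2 * (n - 2)%:R.
  apply: bnd => j _ _; rewrite /b; case: (w _ _); case: (w _ _) => /=; lra.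
case E21: (w i2 i1); last first.
  have E12 : w i1 i2 by move: (wtot i1 i2); rewrite E21 orbF.
  left; rewrite /b E21 E12 /=; lra.
case E12: (w i1 i2); last first.
  have S1 : S <= 1 * (n - 2)%:R.
    apply: bnd => j _ _; rewrite /b.
    case E1: (w i1 j); case E2: (w j i2) => /=; try lra.
    by move: (wtr _ _ _ E1 E2); rewrite E12.
  left; rewrite /b E21 E12 /=; lra.
case: (boolP [exists j : 'I_n, [&& j != i1, j != i2 & ~~ (w i1 j && w j i2)]]).
  case/existsP => j0 /and3P[h1 h2 h3]; left.
  have : 1 <= \sum_(j : 'I_n | (j != i1) && (j != i2)) (2 - (b i1 j + b j i2)).
    rewrite (bigD1 j0) /=; last by rewrite h1 h2.
    have : 0 <= \sum_(i | ((i != i1) && (i != i2)) && (i != j0)) (2 - (b i1 i + b i i2)).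
      apply: sumr_ge0 => j _; rewrite /b; case: (w _ _); case: (w _ _) => /=; lra.
    move: h3; rewrite /b; case: (w i1 j0); case: (w j0 i2) => //= _; lra.
  rewrite sumrB sumc card2 // -/S -mulr_natr /b E21 E12 /=; lra.
rewrite negb_exists => /forallP hall; right; split.
  rewrite /b E21 E12 /=; lra.
rewrite -Qsum /D; apply: eq_bigr => j /andP[h1 h2]; apply: eq_bigr => k /and3P[k1 k2 _].
have := hall j; have := hall k; rewrite h1 h2 k1 k2 /= !negbK => /andP[a1 a2] /andP[a3 a4].
by rewrite /b (wtr _ _ _ (wtr _ _ _ a4 E21) a1).
Qed.

Lemma perW : b i2 i1 + S - b i1 i2 - D <= 2 - ((n - 4) * (n - 5))%:R / 2.
Proof.
have hn : ((n - 4) * (n - 5) + 4 * (n - 2) = (n - 2) * (n - 3) + 6)%N.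
  have [k ->] : exists k, n = (k + 4)%N by exists (n - 4)%N; lia.
  case: k => [|l]; first by [].
  have -> : (l.+1 + 4 - 4 = l.+1)%N by lia.
  have -> : (l.+1 + 4 - 5 = l)%N by lia.
  have -> : (l.+1 + 4 - 2 = l + 3)%N by lia.
  have -> : (l.+1 + 4 - 3 = l + 2)%N by lia.
  nia.
have hR : ((n - 4) * (n - 5))%:R + 4 * (n - 2)%:R = ((n - 2) * (n - 3))%:R + 6 :> R.
  by rewrite -[4]/(4%:R) -[6]/(6%:R) -natrM -!natrD hn.
have Q2 : 2 <= ((n - 2) * (n - 3))%:R :> R.
  by rewrite ler_nat; nia.
have := Dlow; rewrite -/D => hD.
case: key => [h|[h hD']]; lra.
Qed.
End PW.

Lemma lin (R : realFieldType) (n : nat) (i1 i2 : 'I_n) (P : pred (relN n))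
  (g : relN n -> 'I_n -> 'I_n -> R) :
  let F (y : 'I_n -> 'I_n -> R) :=
    y i2 i1
  + \sum_(j : 'I_n | (j != i1) && (j != i2)) (y i1 j + y j i2)
  - y i1 i2
  - \sum_(j : 'I_n | (j != i1) && (j != i2))
      \sum_(j' : 'I_n | [&& j' != i1, j' != i2 & j' != j]) y j j' in
  F (fun i j => \sum_(W | P W) g W i j) = \sum_(W | P W) F (g W).
Proof.
move=> F; rewrite /F !sumrB !big_split /=.
congr (_ + _ - _ - _).
  rewrite -big_split /= [RHS]exchange_big /=; apply: eq_bigr => j _; by rewrite big_split.
under eq_bigr => j _ do rewrite exchange_big.
by rewrite exchange_big.
Qed.

Theorem mainTheorem2 (R : realFieldType) (n : nat) (i1 i2 : 'I_n)
    (x : 'I_n -> 'I_n -> R) :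
  (4 <= n)%N -> i1 != i2 -> in_PWO x ->
  x i2 i1
  + \sum_(j : 'I_n | (j != i1) && (j != i2)) (x i1 j + x j i2)
  - x i1 i2
  - \sum_(j : 'I_n | (j != i1) && (j != i2))
      \sum_(j' : 'I_n | [&& j' != i1, j' != i2 & j' != j]) x j j'
  <= 2 - ((n - 4) * (n - 5))%:R / 2.
Proof.
move=> n4 hi [lam [l0 [l1 hx]]].
pose g W i j := lam W * char_vec R W i j.
have -> : x i2 i1
  + \sum_(j : 'I_n | (j != i1) && (j != i2)) (x i1 j + x j i2)
  - x i1 i2
  - \sum_(j : 'I_n | (j != i1) && (j != i2))
      \sum_(j' : 'I_n | [&& j' != i1, j' != i2 & j' != j]) x j j' =
  (fun i j => \sum_(W | weak_order W) g W i j) i2 i1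
  + \sum_(j : 'I_n | (j != i1) && (j != i2))
      ((fun i j => \sum_(W | weak_order W) g W i j) i1 j
       + (fun i j => \sum_(W | weak_order W) g W i j) j i2)
  - (fun i j => \sum_(W | weak_order W) g W i j) i1 i2
  - \sum_(j : 'I_n | (j != i1) && (j != i2))
      \sum_(j' : 'I_n | [&& j' != i1, j' != i2 & j' != j])
        (fun i j => \sum_(W | weak_order W) g W i j) j j'.
  rewrite /= hx 1?eq_sym // hx //; congr (_ + _ - _ - _).
    apply: eq_bigr => j /andP[h1 h2]; rewrite hx 1?eq_sym // hx //.
  apply: eq_bigr => j /andP[h1 h2]; apply: eq_bigr => k /and3P[_ _ h3].
  by rewrite hx // eq_sym.
rewrite lin.
apply: (@le_trans _ _ (\sum_(W | weak_order W) lam W * (2 - ((n - 4) * (n - 5))%:R / 2))).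
  apply: ler_sum => W hW.
  have -> : g W i2 i1 + \sum_(j < n | (j != i1) && (j != i2)) (g W i1 j + g W j i2) -
    g W i1 i2 - \sum_(j < n | (j != i1) && (j != i2))
     \sum_(j' < n | [&& j' != i1, j' != i2 & j' != j]) g W j j' =
    lam W * (char_vec R W i2 i1 + \sum_(j < n | (j != i1) && (j != i2))
      (char_vec R W i1 j + char_vec R W j i2) -
    char_vec R W i1 i2 - \sum_(j < n | (j != i1) && (j != i2))
     \sum_(j' < n | [&& j' != i1, j' != i2 & j' != j]) char_vec R W j j').
    rewrite /g !mulrBr mulrDr !mulr_sumr; congr (_ + _ - _ - _).
      by apply: eq_bigr => j _; rewrite mulrDr.
    by apply: eq_bigr => j _; rewrite mulr_sumr.
  apply: ler_wpM2l; first exact: l0.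
  move: hW => /and3P[_ /forallP ht /forallP htot].
  apply: (@perW R n i1 i2 (fun i j => W (i, j))) => //.
  - move=> i j k; move: (ht i) => /forallP /(_ j) /forallP /(_ k).
    by move=> /implyP h /h /implyP.
  - by move=> i j; move: (htot i) => /forallP.
by rewrite -mulr_suml l1 mul1r.
Qed.
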